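(* Let $p$ be an imitation kernel $p(g\mid \mathbf w)=\sum_{k\in\mathcal A}\theta_kP_{(k)}(w_{-k},g)$ on a finite set $G$. If the $G$-stochastic function $k\mapsto P_{(k)}$ has more than one closed intercommunicating class, then $|\mathcal G(p)|>1$.
   Context: $G$ finite. A transition kernel is a map $p:G\times G^{-\mathbb N_+}\to[0,1]$ with $p(\cdot\mid \mathbf w)$ a probability on $G$ for every $\mathbf w=(w_{-1},w_{-2},\dots)$. An imitation kernel has the form $p(g\mid\mathbf w)=\sum_{k\in\mathcal A}\theta_kP_{(k)}(w_{-k},g)$, where $\mathcal A\subset\mathbb N_+$, $\theta=(\theta_k)_{k\in\mathcal A}$ is a probability distribution with $\theta_k>0$ for all $k\in\mathcal A$, and each $P_{(k)}$ is a stochastic matrix on $G$. A process $\mathbf X=(X_n)_{n\in\mathbb Z}$ (or its law on $G^{\mathbb Z}$) is compatible with $p$ if $P(X_n=g\mid X_{n-1},X_{n-2},\dots)=p(g\mid X_{n-1},X_{n-2},\dots)$ a.s. for all $n\in\mathbb Z$, $g\in G$; $\mathcal G(p)$ is the set of compatible laws. Words: $\mathcal A^*=\bigcup_{n\ge1}\mathcal A^n$, $P_{\mathbf a}=P_{(a_n)}\cdots P_{(a_1)}$ for $\mathbf a=(a_1,\dots,a_n)$. $i$ communicates with $j\ne i$ if $P_{\mathbf a}(i,j)>0$ for some word; intercommunication (each state with itself included) is an equivalence relation; a class $C$ is closed if $i\in C$ communicating with $j$ implies $j\in C$. *)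

(* Defs.v *)
From Stdlib Require Import Reals List ZArith.
Import ListNotations.
Open Scope R_scope.

Section Defs.
Variable G : Type.
Variable enumG : list G.

(* sum over the finite state set G (enumerated without repetition by enumG) *)
Definition sumG (f : G -> R) : R := fold_right (fun g acc => f g + acc) 0 enumG.

Fixpoint words (L : nat) : list (list G) :=
  match L with
  | O => [ [] ]
  | S L' => flat_map (fun g => map (fun w => g :: w) (words L')) enumG
  end.

Definition sumL (l : list (list G)) (f : list G -> R) : R :=
  fold_right (fun w acc => f w + acc) 0 l.

Definition stochastic (M : G -> G -> R) : Prop :=
  (forall i j, 0 <= M i j) /\ (forall i, sumG (M i) = 1).

Definition inA (theta : nat -> R) (k : nat) : Prop := 0 < theta k.

(* Weights form a probability distribution on A, a subset of N_+ *)
Definition imitation_weights (theta : nat -> R) : Prop :=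
  theta 0%nat = 0 /\ (forall k, 0 <= theta k) /\ infinite_sum theta 1.

(* P_a = P_(a_n) ... P_(a_1) for a = (a_1,...,a_n), n >= 1 *)
Fixpoint Pword (P : nat -> G -> G -> R) (a1 : nat) (rest : list nat) : G -> G -> R :=
  match rest with
  | [] => P a1
  | a2 :: rest' => fun i j => sumG (fun x => Pword P a2 rest' i x * P a1 x j)
  end.

Definition communicates (theta : nat -> R) (P : nat -> G -> G -> R) (i j : G) : Prop :=
  i <> j /\ exists a1 rest, inA theta a1 /\ Forall (inA theta) rest /\
              0 < Pword P a1 rest i j.

Definition intercomm theta P (i j : G) : Prop :=
  i = j \/ (communicates theta P i j /\ communicates theta P j i).

Definition closed_class theta P (i : G) : Prop :=
  forall j l, intercomm theta P i j -> communicates theta P j l -> intercomm theta P i l.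

(* A law on G^Z, described by its (consecutive-window) finite-dimensional
   distributions: fdd n w = P(X_n = w_0, X_(n+1) = w_1, ...). By Kolmogorov's
   extension theorem such consistent families are in bijection with
   probability laws on G^Z. *)
Definition law_fdd (mu : Z -> list G -> R) : Prop :=
  (forall n w, 0 <= mu n w) /\
  (forall n, mu n [] = 1) /\
  (forall n w, mu n w = sumG (fun g => mu n (w ++ [g]))) /\
  (forall n w, mu n w = sumG (fun g => mu (n - 1)%Z (g :: w))).

(* E[ P_k(X_(n-k), g) ; X_(n-m..n-1) = b ]  where b has length m *)
Definition cyl_term (P : nat -> G -> G -> R) (mu : Z -> list G -> R)
  (n : Z) (b : list G) (g : G) (k : nat) : R :=
  let m := length b in
  match b with
  | [] => sumG (fun h => P k h g * mu (n - Z.of_nat k)%Z [h])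
  | b0 :: _ =>
    if Nat.leb k m then P k (nth (m - k) b b0) g * mu (n - Z.of_nat m)%Z b
    else sumG (fun h => P k h g *
           sumL (words (k - m - 1)) (fun c => mu (n - Z.of_nat k)%Z (h :: c ++ b)))
  end.

(* Compatibility with p(g|w) = sum_k theta_k P_(k)(w_(-k), g), tested against
   all cylinder events of the past (which generate the past sigma-field):
   P(X_(n-m..n-1) = b, X_n = g) = E[ p(g | past) ; X_(n-m..n-1) = b ]. *)
Definition compatible (theta : nat -> R) (P : nat -> G -> G -> R)
  (mu : Z -> list G -> R) : Prop :=
  law_fdd mu /\
  forall (n : Z) (b : list G) (g : G),
    infinite_sum (fun k => theta k * cyl_term P mu n b g k)
                 (mu (n - Z.of_nat (length b))%Z (b ++ [g])).

End Defs.

(* Main.v *)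
Require Import Defs.
From Stdlib Require Import Reals List ZArith Lia Lra.
From Stdlib Require Import ClassicalEpsilon Classical Cantor.
Import ListNotations.
Open Scope R_scope.

Definition fsum {A : Type} (l : list A) (f : A -> R) : R :=
  fold_right (fun a acc => f a + acc) 0 l.

Lemma fsum_nil {A} (f : A -> R) : fsum [] f = 0.
Proof. reflexivity. Qed.
Lemma fsum_cons {A} a l (f : A -> R) : fsum (a :: l) f = f a + fsum l f.
Proof. reflexivity. Qed.

Lemma fsum_ext {A} (l : list A) f g :
  (forall a, In a l -> f a = g a) -> fsum l f = fsum l g.
Proof.
  induction l; intros H; simpl; auto.
  rewrite (H a) by (left; auto). rewrite IHl; auto. intros; apply H; right; auto.
Qed.

Lemma fsum_plus {A} (l : list A) f g :
  fsum l (fun a => f a + g a) = fsum l f + fsum l g.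
Proof. induction l; simpl; [lra|]. rewrite IHl; lra. Qed.

Lemma fsum_minus {A} (l : list A) f g :
  fsum l (fun a => f a - g a) = fsum l f - fsum l g.
Proof. induction l; simpl; [lra|]. rewrite IHl; lra. Qed.

Lemma fsum_scal {A} (l : list A) c f :
  fsum l (fun a => c * f a) = c * fsum l f.
Proof. induction l; simpl; [lra|]. rewrite IHl; lra. Qed.

Lemma fsum_scalr {A} (l : list A) c f :
  fsum l (fun a => f a * c) = fsum l f * c.
Proof. induction l; simpl; [lra|]. rewrite IHl; lra. Qed.

Lemma fsum_zero {A} (l : list A) : fsum l (fun _ => 0) = 0.
Proof. induction l; simpl; [lra|]. rewrite IHl; lra. Qed.

Lemma fsum_swap {A B} (l1 : list A) (l2 : list B) f :
  fsum l1 (fun a => fsum l2 (fun b => f a b)) = fsum l2 (fun b => fsum l1 (fun a => f a b)).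
Proof.
  induction l1; simpl.
  - rewrite fsum_zero; auto.
  - rewrite IHl1. rewrite <- fsum_plus. reflexivity.
Qed.

Lemma fsum_app {A} (l1 l2 : list A) f : fsum (l1 ++ l2) f = fsum l1 f + fsum l2 f.
Proof. induction l1; simpl; [lra|]. rewrite IHl1; lra. Qed.

Lemma fsum_map {A B} (h : A -> B) l f : fsum (map h l) f = fsum l (fun a => f (h a)).
Proof. induction l; simpl; auto. rewrite IHl; auto. Qed.

Lemma fsum_flat_map {A B} (h : A -> list B) l f :
  fsum (flat_map h l) f = fsum l (fun a => fsum (h a) f).
Proof. induction l; simpl; auto. rewrite fsum_app, IHl; auto. Qed.

Lemma fsum_nonneg {A} (l : list A) f : (forall a, In a l -> 0 <= f a) -> 0 <= fsum l f.
Proof.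
  induction l; simpl; intros H; [lra|].
  assert (0 <= f a) by (apply H; auto). assert (0 <= fsum l f) by (apply IHl; auto). lra.
Qed.

Lemma fsum_le {A} (l : list A) f g : (forall a, In a l -> f a <= g a) -> fsum l f <= fsum l g.
Proof.
  induction l; simpl; intros H; [lra|].
  assert (f a <= g a) by (apply H; auto). assert (fsum l f <= fsum l g) by (apply IHl; auto). lra.
Qed.

Lemma fsum_term_le {A} (l : list A) f a : (forall a, In a l -> 0 <= f a) -> In a l -> f a <= fsum l f.
Proof.
  induction l; simpl; intros H Ha; [contradiction|].
  destruct Ha as [<-|Ha].
  - assert (0 <= fsum l f) by (apply fsum_nonneg; auto). lra.
  - assert (0 <= f a0) by (apply H; auto). assert (f a <= fsum l f) by (apply IHl; auto). lra.
Qed.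

Lemma fsum_sum_f_R0 {A} (l : list A) (f : nat -> A -> R) M :
  sum_f_R0 (fun k => fsum l (f k)) M = fsum l (fun a => sum_f_R0 (fun k => f k a) M).
Proof.
  induction M; simpl; auto.
  rewrite IHM, <- fsum_plus. reflexivity.
Qed.

Definition eqd {G : Type} (a b : G) : {a = b} + {a <> b} := excluded_middle_informative (a = b).
Definition ie {G : Type} (a b : G) : R := if eqd a b then 1 else 0.

Lemma ie_sym {G : Type} (a b : G) : ie a b = ie b a.
Proof. unfold ie; destruct (eqd a b), (eqd b a); subst; congruence. Qed.

Lemma ie_01 {G : Type} (a b : G) : 0 <= ie a b <= 1.
Proof. unfold ie; destruct (eqd a b); lra. Qed.

Lemma fsum_ie {G : Type} (l : list G) (a : G) f :
  NoDup l -> In a l -> fsum l (fun g => ie a g * f g) = f a.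
Proof.
  induction l; intros Hn Hi; [contradiction|].
  inversion Hn; subst. rewrite fsum_cons. destruct Hi as [->|Hi].
  - unfold ie at 1. destruct (eqd a a); [|congruence].
    rewrite (fsum_ext _ _ (fun _ => 0)). rewrite fsum_zero; lra.
    intros b Hb. unfold ie; destruct (eqd a b); [subst; contradiction|lra].
  - rewrite IHl; auto. unfold ie; destruct (eqd a a0); [subst; contradiction|lra].
Qed.

Lemma fsum_rdist {A} (l : list A) f g : Rabs (fsum l f - fsum l g) <= fsum l (fun a => Rabs (f a - g a)).
Proof.
  induction l; simpl. rewrite Rminus_0_r, Rabs_R0; lra.
  eapply Rle_trans; [|apply Rplus_le_compat_l, IHl].
  replace (f a + fsum l f - (g a + fsum l g)) with ((f a - g a) + (fsum l f - fsum l g)) by ring.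
  apply Rabs_triang.
Qed.

Lemma cv_const (c : R) : Un_cv (fun _ => c) c.
Proof. intros e He; exists 0%nat; intros; unfold R_dist; rewrite Rminus_diag, Rabs_R0; lra. Qed.

Lemma cv_fsum {A} (l : list A) (u : nat -> A -> R) v :
  (forall a, In a l -> Un_cv (fun i => u i a) (v a)) -> Un_cv (fun i => fsum l (u i)) (fsum l v).
Proof.
  induction l; intros H. apply (cv_const 0).
  change (Un_cv (fun i => u i a + fsum l (u i)) (v a + fsum l v)).
  apply CV_plus; [apply H; left; auto| apply IHl; intros; apply H; right; auto].
Qed.

Lemma cv_sum_f_R0 (u : nat -> nat -> R) v M :
  (forall k, Un_cv (fun i => u i k) (v k)) -> Un_cv (fun i => sum_f_R0 (u i) M) (sum_f_R0 v M).
Proof.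
  intros H; induction M; simpl; auto. apply CV_plus; auto.
Qed.

Lemma cv_scal (u : nat -> R) l c : Un_cv u l -> Un_cv (fun i => c * u i) (c * l).
Proof. intros H. apply CV_mult; auto. apply cv_const. Qed.

Lemma cv_le (u : nat -> R) l c N : Un_cv u l -> (forall i, (N <= i)%nat -> u i <= c) -> l <= c.
Proof.
  intros H Hb. destruct (Rle_dec l c) as [|Hn]; auto. exfalso.
  destruct (H (l - c)) as [N' HN']; [lra|].
  specialize (HN' (max N N') (Nat.le_max_r _ _)). specialize (Hb (max N N') (Nat.le_max_l _ _)).
  unfold R_dist in HN'. apply Rabs_def2 in HN'. lra.
Qed.

Lemma cv_ge (u : nat -> R) l c N : Un_cv u l -> (forall i, (N <= i)%nat -> c <= u i) -> c <= l.
Proof.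
  intros H Hb. destruct (Rle_dec c l) as [|Hn]; auto. exfalso.
  destruct (H (c - l)) as [N' HN']; [lra|].
  specialize (HN' (max N N') (Nat.le_max_r _ _)). specialize (Hb (max N N') (Nat.le_max_l _ _)).
  unfold R_dist in HN'. apply Rabs_def2 in HN'. lra.
Qed.

Lemma cv_eq (u v : nat -> R) l1 l2 : Un_cv u l1 -> Un_cv v l2 -> (forall i, u i = v i) -> l1 = l2.
Proof.
  intros H1 H2 He. apply (UL_sequence u); auto.
  intros e He'. destruct (H2 e He') as [N HN]. exists N. intros n Hn. rewrite He. auto.
Qed.
Lemma subseq1 (y : nat -> R) : (forall i, 0 <= y i <= 1) ->
  exists psi : nat -> nat, (forall i, (psi i < psi (S i))%nat) /\ exists l, Un_cv (fun i => y (psi i)) l.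
Proof.
  intros Hy.
  destruct (Bolzano_Weierstrass y (fun c => 0 <= c <= 1) (compact_P3 0 1) Hy) as [l Hl].
  assert (Hp : forall N i, exists p, (N <= p)%nat /\ Rabs (y p - l) < / INR (S i)).
  { intros N i. assert (Hpos : 0 < / INR (S i)) by (apply Rinv_0_lt_compat, lt_0_INR; lia).
    destruct (Hl (disc l (mkposreal _ Hpos)) N) as [p [Hp1 Hp2]].
    - exists (mkposreal _ Hpos). intros z Hz; exact Hz.
    - exists p; split; auto. }
  set (pick := fun N i => proj1_sig (constructive_indefinite_description _ (Hp N i))).
  assert (Hpick : forall N i, (N <= pick N i)%nat /\ Rabs (y (pick N i) - l) < / INR (S i)).
  { intros N i. unfold pick. destruct (constructive_indefinite_description _ (Hp N i)); auto. }
  set (psi := fun i => nat_rect (fun _ => nat) (pick 0%nat 0%nat) (fun i acc => pick (S acc) (S i)) i).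
  assert (HS : forall i, psi (S i) = pick (S (psi i)) (S i)) by reflexivity.
  assert (Hc : forall i, Rabs (y (psi i) - l) < / INR (S i)).
  { intros [|i]. apply Hpick. rewrite HS. apply Hpick. }
  exists psi; split.
  - intros i. rewrite HS. destruct (Hpick (S (psi i)) (S i)). lia.
  - exists l. intros eps He. destruct (archimed_cor1 eps He) as [N [HN HN0]].
    exists N. intros i Hi. unfold R_dist. eapply Rlt_le_trans. apply Hc.
    eapply Rle_trans; [|left; apply HN]. apply Rinv_le_contravar. apply lt_0_INR; lia.
    apply le_INR; lia.
Qed.

Lemma diag (I : Type) (cod : nat -> I) (Hsurj : forall c, exists j, cod j = c)
  (x : nat -> I -> R) (Hb : forall i c, 0 <= x i c <= 1) :
  exists d : nat -> nat, (forall i, (i <= d i)%nat) /\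
    exists V : I -> R, forall c, Un_cv (fun i => x (d i) c) (V c).
Proof.
  assert (Hsub : forall y : nat -> R, exists psi : nat -> nat,
     (forall i, 0 <= y i <= 1) -> (forall i, (psi i < psi (S i))%nat) /\ exists l, Un_cv (fun i => y (psi i)) l).
  { intros y. destruct (classic (forall i, 0 <= y i <= 1)) as [H|H].
    - destruct (subseq1 y H) as [psi Hpsi]. exists psi; auto.
    - exists (fun i => i). intros H'; contradiction. }
  set (sub := fun y => proj1_sig (constructive_indefinite_description _ (Hsub y))).
  assert (Hsubp : forall y, (forall i, 0 <= y i <= 1) ->
     (forall i, (sub y i < sub y (S i))%nat) /\ exists l, Un_cv (fun i => y (sub y i)) l).
  { intros y. unfold sub. destruct (constructive_indefinite_description _ (Hsub y)); auto. }
  assert (Hincr : forall (f : nat -> nat), (forall i, (f i < f (S i))%nat) -> forall i, (i <= f i)%nat).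
  { intros f Hf i; induction i. lia. specialize (Hf i); lia. }
  set (Phi := fix Phi (j : nat) : nat -> nat :=
          match j with
          | O => fun a => a
          | S j' => fun a => Phi j' (sub (fun i => x (Phi j' i) (cod j')) a)
          end).
  assert (HPS : forall j a, Phi (S j) a = Phi j (sub (fun i => x (Phi j i) (cod j)) a)) by reflexivity.
  assert (Hsubb : forall j, (forall i, (sub (fun i => x (Phi j i) (cod j)) i < sub (fun i => x (Phi j i) (cod j)) (S i))%nat) /\
             exists l, Un_cv (fun i => x (Phi (S j) i) (cod j)) l).
  { intros j. apply Hsubp. intros; apply Hb. }
  assert (Hge : forall j a, (a <= Phi j a)%nat).
  { induction j; intros a. simpl; lia. rewrite HPS.
    specialize (IHj (sub (fun i => x (Phi j i) (cod j)) a)).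
    generalize (Hincr _ (proj1 (Hsubb j)) a). lia. }
  assert (Hrel : forall j e a, exists m, (a <= m)%nat /\ Phi (j + e)%nat a = Phi j m).
  { intros j e; induction e; intros a. exists a; rewrite Nat.add_0_r; auto.
    rewrite Nat.add_succ_r, HPS. destruct (IHe (sub (fun i => x (Phi (j + e)%nat i) (cod (j + e)%nat)) a)) as [m [Hm1 Hm2]].
    exists m; split; auto. generalize (Hincr _ (proj1 (Hsubb (j + e)%nat)) a). lia. }
  exists (fun i => Phi (S i) i). split. { intros; apply Hge. }
  assert (Hj : forall j, exists l, Un_cv (fun i => x (Phi (S i) i) (cod j)) l).
  { intros j. destruct (proj2 (Hsubb j)) as [l Hl]. exists l.
    intros eps He. destruct (Hl eps He) as [N HN]. exists (max N j). intros i Hi.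
    destruct (Hrel (S j) (i - j)%nat i) as [m [Hm1 Hm2]].
    replace (S j + (i - j))%nat with (S i) in Hm2 by lia. rewrite Hm2. apply HN. lia. }
  assert (Hc : forall c, exists l, Un_cv (fun i => x (Phi (S i) i) c) l).
  { intros c. destruct (Hsurj c) as [j <-]. apply Hj. }
  exists (fun c => proj1_sig (constructive_indefinite_description _ (Hc c))).
  intros c. destruct (constructive_indefinite_description _ (Hc c)); auto.
Qed.
Section Proc.
Variable G : Type.
Variable enumG : list G.
Hypothesis HnodupG : NoDup enumG.
Hypothesis HfullG : forall x : G, In x enumG.
Variable theta : nat -> R.
Variable P : nat -> G -> G -> R.
Hypothesis Hth0 : theta 0%nat = 0.
Hypothesis Hthnn : forall k, 0 <= theta k.
Hypothesis Hthsum : infinite_sum theta 1.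
Hypothesis HP : forall k, inA theta k -> stochastic G enumG (P k).
Variable i0 : G.

Notation wds := (words G enumG).

Lemma words_len L y : In y (wds L) -> length y = L.
Proof.
  revert y; induction L; simpl; intros y H.
  - destruct H as [<-|[]]; auto.
  - apply in_flat_map in H. destruct H as [g [_ H]]. apply in_map_iff in H.
    destruct H as [y' [<- H]]. simpl. rewrite IHL; auto.
Qed.

Lemma words_In y : In y (wds (length y)).
Proof.
  induction y; simpl; auto. apply in_flat_map. exists a; split; auto. apply in_map; auto.
Qed.

Lemma sumL_words_S L f : fsum (wds (S L)) f = fsum enumG (fun g => fsum (wds L) (fun y => f (g :: y))).
Proof. simpl words. rewrite fsum_flat_map. apply fsum_ext; intros; rewrite fsum_map; reflexivity. Qed.

Lemma sumL_words_snoc L : forall f, fsum (wds (S L)) f = fsum enumG (fun g => fsum (wds L) (fun y => f (y ++ [g]))).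
Proof.
  induction L; intros f.
  - rewrite sumL_words_S. reflexivity.
  - rewrite sumL_words_S.
    rewrite (fsum_ext _ _ (fun g => fsum enumG (fun g' => fsum (wds L) (fun y => f (g :: y ++ [g']))))).
    2:{ intros g _. rewrite IHL. reflexivity. }
    rewrite fsum_swap. apply fsum_ext. intros g' _. rewrite sumL_words_S. reflexivity.
Qed.

Lemma psum_le1 M : sum_f_R0 theta M <= 1.
Proof.
  apply (growing_ineq (fun n => sum_f_R0 theta n)); [|exact Hthsum].
  intros n; simpl. specialize (Hthnn (S n)); lra.
Qed.

Definition tl M := 1 - sum_f_R0 theta M.
Lemma tl_nn M : 0 <= tl M.
Proof. unfold tl; generalize (psum_le1 M); lra. Qed.

Lemma stoch_nn k x g : 0 < theta k -> 0 <= P k x g.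
Proof. intros H. destruct (HP k H) as [H1 _]. apply H1. Qed.
Lemma stoch_sum k x : 0 < theta k -> fsum enumG (P k x) = 1.
Proof. intros H. destruct (HP k H) as [_ H2]. apply H2. Qed.
Lemma stoch_le1 k x g : 0 < theta k -> P k x g <= 1.
Proof.
  intros H. rewrite <- (stoch_sum k x H). apply fsum_term_le; auto.
  intros; apply stoch_nn; auto.
Qed.

Lemma thP_nn k x g : 0 <= theta k * P k x g.
Proof.
  destruct (Hthnn k) as [H|H].
  - apply Rmult_le_pos; [lra|apply stoch_nn; auto].
  - rewrite <- H; lra.
Qed.

Lemma thP_le k x g : theta k * P k x g <= theta k.
Proof.
  destruct (Hthnn k) as [H|H].
  - generalize (stoch_le1 k x g H); intros; nra.
  - rewrite <- H; lra.
Qed.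

Lemma thP_sum k x : fsum enumG (fun g => theta k * P k x g) = theta k.
Proof.
  rewrite fsum_scal. destruct (Hthnn k) as [H|H].
  - rewrite stoch_sum; auto; lra.
  - rewrite <- H; lra.
Qed.

Definition val (y : list G) (t : Z) : G :=
  if (t <? 0)%Z then i0 else nth (Z.to_nat t) y i0.

Fixpoint ind (y : list G) (t : Z) (w : list G) : R :=
  match w with
  | [] => 1
  | a :: w' => ie (val y t) a * ind y (t + 1) w'
  end.

Definition q (y : list G) (g : G) : R :=
  sum_f_R0 (fun k => theta k * P k (nth (length y - k) y i0) g) (length y)
  + tl (length y) * ie i0 g.

Fixpoint Qa (acc rest : list G) : R :=
  match rest with
  | [] => 1
  | g :: r => q acc g * Qa (acc ++ [g]) r
  end.
Definition Q y := Qa [] y.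

Lemma Qa_snoc r : forall acc g, Qa acc (r ++ [g]) = Qa acc r * q (acc ++ r) g.
Proof.
  induction r; intros acc g; simpl.
  - rewrite app_nil_r; ring.
  - rewrite IHr, <- app_assoc. simpl. ring.
Qed.

Lemma Q_snoc y g : Q (y ++ [g]) = Q y * q y g.
Proof. unfold Q; rewrite Qa_snoc; reflexivity. Qed.

Lemma Q_nil : Q [] = 1.
Proof. reflexivity. Qed.

Lemma q_nn y g : 0 <= q y g.
Proof.
  unfold q. apply Rplus_le_le_0_compat.
  - apply cond_pos_sum; intros; apply thP_nn.
  - apply Rmult_le_pos; [apply tl_nn|apply ie_01].
Qed.

Lemma q_sum y : fsum enumG (q y) = 1.
Proof.
  unfold q. rewrite fsum_plus, fsum_scal.
  rewrite <- fsum_sum_f_R0.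
  rewrite (sum_eq _ theta). 2:{ intros; apply thP_sum. }
  rewrite (fsum_ext _ (ie i0) (fun g => ie i0 g * 1)) by (intros; ring).
  rewrite (fsum_ie _ i0 (fun _ => 1)); auto. unfold tl; ring.
Qed.

Lemma Q_nn y : 0 <= Q y.
Proof.
  induction y using rev_ind. unfold Q; simpl; lra.
  rewrite Q_snoc. apply Rmult_le_pos; auto. apply q_nn.
Qed.

Lemma Q_sum T : fsum (wds T) Q = 1.
Proof.
  induction T. unfold fsum; simpl; unfold Q; simpl; lra.
  rewrite sumL_words_snoc, fsum_swap.
  rewrite <- IHT. apply fsum_ext; intros y _.
  rewrite (fsum_ext _ _ (fun g => Q y * q y g)) by (intros; apply Q_snoc).
  rewrite fsum_scal, q_sum. ring.
Qed.

Lemma marg T h : (forall y g, length y = T -> h (y ++ [g]) = h y) ->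
  fsum (wds (S T)) (fun y => Q y * h y) = fsum (wds T) (fun y => Q y * h y).
Proof.
  intros H. rewrite sumL_words_snoc, fsum_swap. apply fsum_ext; intros y Hy.
  apply words_len in Hy.
  rewrite (fsum_ext _ _ (fun g => (Q y * h y) * q y g)).
  2:{ intros g _. rewrite Q_snoc, H; auto. ring. }
  rewrite fsum_scal, q_sum; ring.
Qed.

Lemma val_snoc y g t : (t < Z.of_nat (length y))%Z -> val (y ++ [g]) t = val y t.
Proof.
  intros H. unfold val. destruct (t <? 0)%Z eqn:E; auto.
  apply Z.ltb_ge in E. rewrite app_nth1; auto. lia.
Qed.

Lemma val_last y g : val (y ++ [g]) (Z.of_nat (length y)) = g.
Proof.
  unfold val. destruct (Z.of_nat (length y) <? 0)%Z eqn:E. apply Z.ltb_lt in E; lia.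
  rewrite Nat2Z.id, nth_middle. reflexivity.
Qed.

Lemma ind_snoc y g w : forall t, (t + Z.of_nat (length w) <= Z.of_nat (length y))%Z ->
  ind (y ++ [g]) t w = ind y t w.
Proof.
  induction w; intros t H; simpl; auto.
  simpl length in H. rewrite val_snoc by lia. rewrite IHw by lia. reflexivity.
Qed.

Lemma ind_app y w1 : forall w2 t, ind y t (w1 ++ w2) = ind y t w1 * ind y (t + Z.of_nat (length w1)) w2.
Proof.
  induction w1; intros w2 t; simpl.
  - rewrite Z.add_0_r; ring.
  - rewrite IHw1. replace (t + 1 + Z.of_nat (length w1))%Z with (t + Z.pos (Pos.of_succ_nat (length w1)))%Z by lia.
    ring.
Qed.

Lemma ind_01 y w : forall t, 0 <= ind y t w <= 1.
Proof.
  induction w; intros t; simpl. lra.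
  generalize (ie_01 (val y t) a) (IHw (t + 1)%Z). intros; nra.
Qed.

Lemma ind_words y L : forall t, fsum (wds L) (fun c => ind y t c) = 1.
Proof.
  induction L; intros t. simpl. unfold fsum; simpl; lra.
  rewrite sumL_words_S.
  rewrite (fsum_ext _ _ (fun g => ie (val y t) g * 1)).
  2:{ intros g _. change (fsum (wds L) (fun c => ie (val y t) g * ind y (t+1) c) = ie (val y t) g * 1).
      rewrite fsum_scal, IHL. reflexivity. }
  apply (fsum_ie _ _ (fun _ => 1)); auto.
Qed.

Lemma ind_words_app y L w t : fsum (wds L) (fun c => ind y t (c ++ w)) = ind y (t + Z.of_nat L) w.
Proof.
  rewrite (fsum_ext _ _ (fun c => ind y t c * ind y (t + Z.of_nat L) w)).
  2:{ intros c Hc. rewrite ind_app, (words_len _ _ Hc). reflexivity. }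
  rewrite fsum_scalr, ind_words; ring.
Qed.

Lemma ind_nth y b : forall t i d, (i < length b)%nat ->
  ind y t b = 0 \/ val y (t + Z.of_nat i) = nth i b d.
Proof.
  induction b; intros t i d Hi; simpl in Hi. lia.
  simpl. unfold ie at 1. destruct (eqd (val y t) a) as [E|E].
  - destruct i. { right. rewrite Z.add_0_r. simpl. auto. }
    destruct (IHb (t+1)%Z i d) as [H|H]; [lia|left; rewrite H; ring|].
    right. rewrite <- H. f_equal. lia.
  - left; ring.
Qed.

Definition Fr (r : Z) (w : list G) : R :=
  fsum (wds (Z.to_nat (r + Z.of_nat (length w)))) (fun y => Q y * ind y r w).

Lemma Fr_fit r w T : (r + Z.of_nat (length w) <= Z.of_nat T)%Z ->
  fsum (wds T) (fun y => Q y * ind y r w) = Fr r w.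
Proof.
  intros H. unfold Fr. set (T0 := Z.to_nat (r + Z.of_nat (length w))).
  assert (HT : (T0 <= T)%nat) by (unfold T0; lia).
  assert (H0 : (r + Z.of_nat (length w) <= Z.of_nat T0)%Z) by (unfold T0; lia).
  clearbody T0. induction HT. reflexivity.
  rewrite marg. apply IHHT. lia.
  intros y g Hy. rewrite ind_snoc; auto. rewrite Hy. lia.
Qed.

Lemma Fr_nn r w : 0 <= Fr r w.
Proof.
  unfold Fr. apply fsum_nonneg; intros. apply Rmult_le_pos. apply Q_nn. apply ind_01.
Qed.

Lemma Fr_le1 r w : Fr r w <= 1.
Proof.
  unfold Fr. rewrite <- (Q_sum (Z.to_nat (r + Z.of_nat (length w)))).
  apply fsum_le; intros. generalize (Q_nn a) (ind_01 a w r); intros; nra.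
Qed.

Lemma Fr_nil r : Fr r [] = 1.
Proof.
  unfold Fr. simpl ind. rewrite (fsum_ext _ _ Q) by (intros; ring). apply Q_sum.
Qed.

Lemma Fr_right r w : Fr r w = fsum enumG (fun g => Fr r (w ++ [g])).
Proof.
  set (T := Z.to_nat (r + Z.of_nat (length w) + 1)).
  rewrite <- (Fr_fit r w T) by (unfold T; lia).
  rewrite (fsum_ext _ _ (fun g => fsum (wds T) (fun y => Q y * ind y r (w ++ [g])))).
  2:{ intros g _. symmetry; apply Fr_fit. rewrite length_app. simpl. unfold T; lia. }
  rewrite fsum_swap. apply fsum_ext; intros y _.
  rewrite (fsum_ext _ _ (fun g => ie (val y (r + Z.of_nat (length w))) g * (Q y * ind y r w))).
  2:{ intros g _. rewrite ind_app. simpl. ring. }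
  rewrite fsum_ie; auto.
Qed.

Lemma Fr_left r w : Fr r w = fsum enumG (fun g => Fr (r - 1) (g :: w)).
Proof.
  set (T := Z.to_nat (r + Z.of_nat (length w))).
  rewrite <- (Fr_fit r w T) by (unfold T; lia).
  rewrite (fsum_ext _ _ (fun g => fsum (wds T) (fun y => Q y * ind y (r - 1) (g :: w)))).
  2:{ intros g _. symmetry; apply Fr_fit. simpl length. unfold T; lia. }
  rewrite fsum_swap. apply fsum_ext; intros y _.
  rewrite (fsum_ext _ _ (fun g => ie (val y (r - 1)) g * (Q y * ind y r w))).
  2:{ intros g _. simpl. rewrite Z.sub_add. ring. }
  rewrite fsum_ie; auto.
Qed.

Lemma inner_cyl t L b h T : (t + 1 + Z.of_nat L + Z.of_nat (length b) <= Z.of_nat T)%Z ->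
  fsum (wds L) (fun c => Fr t (h :: c ++ b)) =
  fsum (wds T) (fun y => Q y * (ie (val y t) h * ind y (t + 1 + Z.of_nat L) b)).
Proof.
  intros H.
  rewrite (fsum_ext _ _ (fun c => fsum (wds T) (fun y => Q y * ind y t (h :: c ++ b)))).
  2:{ intros c Hc. symmetry. apply Fr_fit. simpl length. rewrite length_app, (words_len _ _ Hc). lia. }
  rewrite fsum_swap. apply fsum_ext; intros y _.
  change (fsum (wds L) (fun c => Q y * (ie (val y t) h * ind y (t + 1) (c ++ b))) =
          Q y * (ie (val y t) h * ind y (t + 1 + Z.of_nat L) b)).
  rewrite fsum_scal, fsum_scal, ind_words_app. reflexivity.
Qed.

Lemma cyl_core (mu : Z -> list G -> R) a n T b g k :
  (forall t w, mu t w = Fr (t + a) w) ->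
  (n + a = Z.of_nat T)%Z -> (length b <= T)%nat -> (1 <= k <= T)%nat ->
  cyl_term G enumG P mu n b g k =
  fsum (wds T) (fun y => Q y * ind y (Z.of_nat T - Z.of_nat (length b)) b *
                          P k (val y (Z.of_nat T - Z.of_nat k)) g).
Proof.
  intros Hmu HT Hb Hk. unfold cyl_term. cbv zeta.
  destruct b as [|b0 b'] eqn:Eb.
  - change (fsum enumG (fun h => P k h g * mu (n - Z.of_nat k)%Z [h]) =
      fsum (wds T) (fun y => Q y * 1 * P k (val y (Z.of_nat T - Z.of_nat k)) g)).
    rewrite (fsum_ext _ _ (fun h => fsum (wds T) (fun y => ie (val y (Z.of_nat T - Z.of_nat k)) h * (P k h g * Q y)))).
    2:{ intros h _. rewrite Hmu. rewrite <- (Fr_fit _ _ T) by (simpl; lia).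
        rewrite <- fsum_scal. apply fsum_ext; intros y _. simpl.
        replace (n - Z.of_nat k + a)%Z with (Z.of_nat T - Z.of_nat k)%Z by lia. ring. }
    rewrite fsum_swap. apply fsum_ext; intros y _. rewrite fsum_ie; auto. ring.
  - rewrite <- Eb. destruct (Nat.leb k (length b)) eqn:Ek.
    + apply Nat.leb_le in Ek. rewrite Hmu.
      rewrite <- (Fr_fit _ _ T) by lia. rewrite <- fsum_scal.
      apply fsum_ext; intros y _.
      replace (n - Z.of_nat (length b) + a)%Z with (Z.of_nat T - Z.of_nat (length b))%Z by lia.
      destruct (ind_nth y b (Z.of_nat T - Z.of_nat (length b)) (length b - k) b0) as [E|E]; [lia| |].
      * rewrite E; ring.
      * replace (Z.of_nat T - Z.of_nat (length b) + Z.of_nat (length b - k))%Z with (Z.of_nat T - Z.of_nat k)%Z in E by lia.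
        rewrite E. ring.
    + apply Nat.leb_gt in Ek.
      change (fsum enumG (fun h => P k h g * fsum (wds (k - length b - 1)) (fun c => mu (n - Z.of_nat k)%Z (h :: c ++ b))) =
        fsum (wds T) (fun y => Q y * ind y (Z.of_nat T - Z.of_nat (length b)) b * P k (val y (Z.of_nat T - Z.of_nat k)) g)).
      rewrite (fsum_ext _ _ (fun h => fsum (wds T) (fun y => ie (val y (Z.of_nat T - Z.of_nat k)) h *
                 (P k h g * (Q y * ind y (Z.of_nat T - Z.of_nat (length b)) b))))).
      2:{ intros h _.
          rewrite (fsum_ext _ _ (fun c => Fr (Z.of_nat T - Z.of_nat k) (h :: c ++ b))).
          2:{ intros c _. rewrite Hmu. f_equal. lia. }
          rewrite (inner_cyl _ _ _ _ T) by lia. rewrite <- fsum_scal. apply fsum_ext; intros y _.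
          replace (Z.of_nat T - Z.of_nat k + 1 + Z.of_nat (k - length b - 1))%Z with (Z.of_nat T - Z.of_nat (length b))%Z by lia.
          ring. }
      rewrite fsum_swap. apply fsum_ext; intros y _. rewrite fsum_ie; auto. ring.
Qed.

Lemma Fr_step T b g : (length b <= T)%nat ->
  Fr (Z.of_nat T - Z.of_nat (length b)) (b ++ [g]) =
  fsum (wds T) (fun y => Q y * ind y (Z.of_nat T - Z.of_nat (length b)) b * q y g).
Proof.
  intros Hb. rewrite <- (Fr_fit _ _ (S T)) by (rewrite length_app; simpl; lia).
  rewrite sumL_words_snoc, fsum_swap. apply fsum_ext; intros y Hy.
  apply words_len in Hy.
  rewrite (fsum_ext _ _ (fun g' => ie g' g * (Q y * ind y (Z.of_nat T - Z.of_nat (length b)) b * q y g'))).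
  2:{ intros g' _. rewrite Q_snoc, ind_app, ind_snoc by lia. simpl ind.
      replace (Z.of_nat T - Z.of_nat (length b) + Z.of_nat (length b))%Z with (Z.of_nat (length y)) by lia.
      rewrite val_last. ring. }
  rewrite (fsum_ext _ _ (fun g' => ie g g' * (Q y * ind y (Z.of_nat T - Z.of_nat (length b)) b * q y g'))).
  2:{ intros; rewrite ie_sym; auto. }
  rewrite fsum_ie; auto.
Qed.

Lemma sum_diff (f h : nat -> R) M d : (forall k, 0 <= f k <= h k) ->
  0 <= sum_f_R0 f (M + d) - sum_f_R0 f M <= sum_f_R0 h (M + d) - sum_f_R0 h M.
Proof.
  intros H. induction d. rewrite Nat.add_0_r; lra.
  rewrite Nat.add_succ_r. simpl. specialize (H (S (M + d))). lra.
Qed.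

Lemma q_diff y g M : (M <= length y)%nat ->
  0 <= q y g - sum_f_R0 (fun k => theta k * P k (val y (Z.of_nat (length y) - Z.of_nat k)) g) M <= tl M.
Proof.
  intros HM. rewrite (sum_eq _ (fun k => theta k * P k (nth (length y - k) y i0) g)).
  2:{ intros k Hk. unfold val. destruct (Z.of_nat (length y) - Z.of_nat k <? 0)%Z eqn:E.
      apply Z.ltb_lt in E; lia. f_equal. f_equal. f_equal. lia. }
  unfold q. set (f := fun k => theta k * P k (nth (length y - k) y i0) g).
  destruct (sum_diff f theta M (length y - M)) as [H1 H2].
  { intros k; unfold f; split; [apply thP_nn|apply thP_le]. }
  replace (M + (length y - M))%nat with (length y) in H1, H2 by lia.
  generalize (ie_01 i0 g) (tl_nn (length y)). unfold tl in *. intros. nra.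
Qed.

Lemma scal_sum_f (f : nat -> R) c M : sum_f_R0 (fun k => c * f k) M = c * sum_f_R0 f M.
Proof. induction M; simpl; auto. rewrite IHM; ring. Qed.

Lemma approx (mu : Z -> list G -> R) a n b g M :
  (forall t w, mu t w = Fr (t + a) w) ->
  (Z.of_nat (length b) <= n + a)%Z -> (Z.of_nat M <= n + a)%Z ->
  0 <= mu (n - Z.of_nat (length b))%Z (b ++ [g]) -
       sum_f_R0 (fun k => theta k * cyl_term G enumG P mu n b g k) M <= tl M.
Proof.
  intros Hmu Hb HM. set (T := Z.to_nat (n + a)).
  assert (HT : (n + a = Z.of_nat T)%Z) by (unfold T; lia).
  rewrite Hmu. replace (n - Z.of_nat (length b) + a)%Z with (Z.of_nat T - Z.of_nat (length b))%Z by lia.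
  rewrite Fr_step by lia.
  rewrite (sum_eq _ (fun k => fsum (wds T) (fun y => theta k * (Q y * ind y (Z.of_nat T - Z.of_nat (length b)) b *
                          P k (val y (Z.of_nat T - Z.of_nat k)) g)))).
  2:{ intros k Hk. destruct k.
      - rewrite Hth0. rewrite (fsum_ext _ _ (fun _ => 0)) by (intros; ring). rewrite fsum_zero; ring.
      - rewrite fsum_scal. f_equal. apply (cyl_core mu a); auto; lia. }
  rewrite fsum_sum_f_R0, <- fsum_minus.
  set (D := fun y : list G => q y g - sum_f_R0 (fun k => theta k * P k (val y (Z.of_nat T - Z.of_nat k)) g) M).
  rewrite (fsum_ext _ _ (fun y => Q y * (ind y (Z.of_nat T - Z.of_nat (length b)) b * D y))).
  2:{ intros y _. unfold D.
      rewrite (sum_eq _ (fun k => (Q y * ind y (Z.of_nat T - Z.of_nat (length b)) b) *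
                 (theta k * P k (val y (Z.of_nat T - Z.of_nat k)) g))) by (intros; ring).
      rewrite scal_sum_f. ring. }
  split.
  - apply fsum_nonneg; intros y Hy. apply words_len in Hy.
    generalize (Q_nn y) (ind_01 y b (Z.of_nat T - Z.of_nat (length b))) (q_diff y g M). unfold D.
    rewrite Hy. intros H1 H2 H3. destruct H3 as [H3 H4]; [lia|].
    apply Rmult_le_pos; auto. apply Rmult_le_pos; lra.
  - rewrite <- (Rmult_1_r (tl M)), <- (Q_sum T), <- fsum_scal.
    apply fsum_le; intros y Hy. apply words_len in Hy.
    generalize (Q_nn y) (ind_01 y b (Z.of_nat T - Z.of_nat (length b))) (q_diff y g M). unfold D.
    rewrite Hy. intros H1 H2 H3. destruct H3 as [H3 H4]; [lia|].
    assert (ind y (Z.of_nat T - Z.of_nat (length b)) b * (q y g - sum_f_R0 (fun k => theta k * P k (val y (Z.of_nat T - Z.of_nat k)) g) M) <= tl M) by nra.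
    nra.
Qed.

Variable C : G -> Prop.
Hypothesis Ci0 : C i0.
Hypothesis Cclosed : forall x k g, C x -> 0 < theta k -> 0 < P k x g -> C g.

Lemma sum_nz (f : nat -> R) N : sum_f_R0 f N <> 0 -> exists k, (k <= N)%nat /\ f k <> 0.
Proof.
  induction N; simpl; intros H. exists 0%nat; split; auto.
  destruct (Req_dec (f (S N)) 0) as [E|E].
  - destruct IHN as [k [Hk Hf]]. rewrite E in H; lra. exists k; split; auto.
  - exists (S N); split; auto.
Qed.

Lemma nth_C y t : (forall z, In z y -> C z) -> C (nth t y i0).
Proof. intros H. destruct (nth_in_or_default t y i0) as [Hi|Hd]; auto. rewrite Hd; auto. Qed.

Lemma Q_support y : Q y <> 0 -> forall z, In z y -> C z.
Proof.
  induction y as [|g y IH] using rev_ind; intros H z Hz. destruct Hz.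
  rewrite Q_snoc in H.
  assert (HQ : Q y <> 0) by (intro E; apply H; rewrite E; ring).
  assert (Hq : q y g <> 0) by (intro E; apply H; rewrite E; ring).
  apply in_app_or in Hz. destruct Hz as [Hz|[<-|[]]]; [apply IH; auto|].
  unfold q in Hq.
  destruct (Req_dec (tl (length y) * ie i0 g) 0) as [E|E].
  - rewrite E, Rplus_0_r in Hq. apply sum_nz in Hq. destruct Hq as [k [_ Hk]].
    assert (Ht : 0 < theta k). { destruct (Hthnn k) as [|E']; auto. rewrite <- E' in Hk; lra. }
    apply (Cclosed (nth (length y - k) y i0) k); auto. apply nth_C; auto.
    destruct (stoch_nn k (nth (length y - k) y i0) g Ht) as [|E']; auto.
    rewrite <- E' in Hk; lra.
  - unfold ie in E. destruct (eqd i0 g); [subst; auto|]. lra.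
Qed.

Lemma Fr_support r x : ~ C x -> Fr r [x] = 0.
Proof.
  intros Hx. unfold Fr. rewrite (fsum_ext _ _ (fun _ => 0)). apply fsum_zero.
  intros y _. destruct (Req_dec (Q y) 0) as [E|E]. rewrite E; ring.
  simpl ind. unfold ie. destruct (eqd (val y r) x) as [Ev|]; [|ring].
  exfalso. apply Hx. rewrite <- Ev. unfold val. destruct (r <? 0)%Z; auto.
  apply nth_C. apply Q_support; auto.
Qed.


Lemma cyl_cont (mu : nat -> Z -> list G -> R) V n b g k :
  (forall t w, Un_cv (fun i => mu i t w) (V t w)) ->
  Un_cv (fun i => cyl_term G enumG P (mu i) n b g k) (cyl_term G enumG P V n b g k).
Proof.
  intros H. unfold cyl_term. cbv zeta. destruct b as [|b0 b'].
  - apply (cv_fsum enumG (fun i h => P k h g * mu i (n - Z.of_nat k)%Z [h])).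
    intros; apply cv_scal; auto.
  - destruct (Nat.leb k (length (b0 :: b'))).
    + apply cv_scal; auto.
    + apply (cv_fsum enumG (fun i h => P k h g * fsum (wds (k - length (b0 :: b') - 1))
               (fun c => mu i (n - Z.of_nat k)%Z (h :: c ++ b0 :: b')))).
      intros h _; apply cv_scal.
      apply (cv_fsum _ (fun i c => mu i (n - Z.of_nat k)%Z (h :: c ++ b0 :: b'))). intros; auto.
Qed.

Definition cod (j : nat) : Z * list G :=
  let (a, r) := Cantor.of_nat j in
  let (b, r2) := Cantor.of_nat r in
  let (L, idx) := Cantor.of_nat r2 in
  ((Z.of_nat a - Z.of_nat b)%Z, nth idx (wds L) []).

Lemma cod_surj c : exists j, cod j = c.
Proof.
  destruct c as [n w].
  destruct (In_nth _ _ [] (words_In w)) as [idx [_ Hidx]].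
  exists (Cantor.to_nat (Z.to_nat n, Cantor.to_nat (Z.to_nat (- n), Cantor.to_nat (length w, idx)))).
  unfold cod. rewrite !Cantor.cancel_of_to. rewrite Hidx. f_equal. lia.
Qed.

Lemma exists_compat : exists V, compatible G enumG theta P V /\ forall x, ~ C x -> V 0%Z [x] = 0.
Proof.
  set (mu := fun (i : nat) (t : Z) (w : list G) => Fr (t + Z.of_nat i) w).
  destruct (diag _ cod cod_surj (fun i c => mu i (fst c) (snd c))) as [d [Hd [V0 HV0]]].
  { intros i c. split; [apply Fr_nn|apply Fr_le1]. }
  set (V := fun t w => V0 (t, w)).
  assert (HV : forall t w, Un_cv (fun i => mu (d i) t w) (V t w)) by (intros; apply (HV0 (t, w))).
  exists V. split; [split; [split; [|split; [|split]]|]|].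
  - intros n w. apply (cv_ge _ _ 0 0 (HV n w)). intros; apply Fr_nn.
  - intros n. symmetry. apply (cv_eq (fun _ => 1) (fun i => mu (d i) n [])); auto.
    apply cv_const. intros; unfold mu; rewrite Fr_nil; auto.
  - intros n w. apply (cv_eq (fun i => mu (d i) n w) (fun i => fsum enumG (fun g => mu (d i) n (w ++ [g])))); auto.
    apply (cv_fsum enumG (fun i g => mu (d i) n (w ++ [g]))). intros; apply HV.
    intros i. unfold mu. apply Fr_right.
  - intros n w. apply (cv_eq (fun i => mu (d i) n w) (fun i => fsum enumG (fun g => mu (d i) (n - 1)%Z (g :: w)))); auto.
    apply (cv_fsum enumG (fun i g => mu (d i) (n - 1)%Z (g :: w))). intros; apply HV.
    intros i. unfold mu. rewrite Fr_left. apply fsum_ext; intros. f_equal. lia.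
  - intros n b g eps He.
    destruct (Hthsum eps He) as [N HN]. exists N. intros M HM.
    specialize (HN M HM). unfold R_dist in *.
    set (z := fun i => mu (d i) (n - Z.of_nat (length b))%Z (b ++ [g]) -
                       sum_f_R0 (fun k => theta k * cyl_term G enumG P (mu (d i)) n b g k) M).
    assert (Hz : Un_cv z (V (n - Z.of_nat (length b))%Z (b ++ [g]) -
                       sum_f_R0 (fun k => theta k * cyl_term G enumG P V n b g k) M)).
    { apply CV_minus. apply HV. apply (cv_sum_f_R0 (fun i k => theta k * cyl_term G enumG P (mu (d i)) n b g k)).
      intros k. apply cv_scal. apply cyl_cont. auto. }
    set (N0 := Z.to_nat (Z.of_nat (length b) + Z.of_nat M - n)).
    assert (Hb : forall i, (N0 <= i)%nat -> 0 <= z i <= tl M).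
    { intros i Hi. unfold z. apply (approx (mu (d i)) (Z.of_nat (d i))).
      - intros; reflexivity.
      - generalize (Hd i); unfold N0 in Hi; lia.
      - generalize (Hd i); unfold N0 in Hi; lia. }
    assert (H1 := cv_ge _ _ 0 N0 Hz (fun i Hi => proj1 (Hb i Hi))).
    assert (H2 := cv_le _ _ (tl M) N0 Hz (fun i Hi => proj2 (Hb i Hi))).
    unfold tl in H2. rewrite Rabs_minus_sym, Rabs_pos_eq by lra.
    apply Rabs_def2 in HN. lra.
  - intros x Hx. symmetry. apply (cv_eq (fun _ => 0) (fun i => mu (d i) 0%Z [x])); auto.
    apply cv_const. intros i. unfold mu. rewrite Fr_support; auto.
Qed.

End Proc.

Theorem mainTheorem2
  (G : Type) (enumG : list G)
  (HnodupG : NoDup enumG) (HfullG : forall x : G, In x enumG)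
  (theta : nat -> R) (P : nat -> G -> G -> R)
  (Htheta : imitation_weights theta)
  (HP : forall k, inA theta k -> @stochastic G enumG (P k))
  (Hclasses : exists i1 i2 : G,
      ~ @intercomm G enumG theta P i1 i2 /\
      @closed_class G enumG theta P i1 /\ @closed_class G enumG theta P i2) :
  exists mu1 mu2 : Z -> list G -> R,
    @compatible G enumG theta P mu1 /\ @compatible G enumG theta P mu2 /\
    exists (n : Z) (w : list G), mu1 n w <> mu2 n w.
Proof.
  destruct Htheta as [Hth0 [Hthnn Hthsum]].
  destruct Hclasses as [i1 [i2 [Hn [Hc1 Hc2]]]].
  assert (Hcl : forall i, closed_class G enumG theta P i -> forall x k g,
            intercomm G enumG theta P i x -> 0 < theta k -> 0 < P k x g -> intercomm G enumG theta P i g).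
  { intros i Hc x k g Hx Hk Hp. destruct (classic (x = g)) as [<-|Hne]; auto.
    apply (Hc x g Hx). split; auto. exists k, []. split; auto. }
  assert (Hrefl : forall i, intercomm G enumG theta P i i) by (intros; left; auto).
  destruct (exists_compat G enumG HnodupG HfullG theta P Hth0 Hthnn Hthsum HP i1
             (intercomm G enumG theta P i1) (Hrefl i1) (Hcl i1 Hc1)) as [V1 [HV1 HS1]].
  destruct (exists_compat G enumG HnodupG HfullG theta P Hth0 Hthnn Hthsum HP i2
             (intercomm G enumG theta P i2) (Hrefl i2) (Hcl i2 Hc2)) as [V2 [HV2 HS2]].
  exists V1, V2. split; auto. split; auto.
  apply NNPP. intros Hne.
  assert (Heq : forall x, V1 0%Z [x] = V2 0%Z [x]).
  { intros x. apply NNPP. intros H. apply Hne. exists 0%Z, [x]. auto. }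
  assert (Hdisj : forall x, intercomm G enumG theta P i1 x -> intercomm G enumG theta P i2 x -> False).
  { intros x H1 H2. destruct H2 as [<-|[H2a H2b]].
    - apply Hn; auto.
    - apply Hn. apply (Hc1 x i2 H1 H2b). }
  assert (Hz : forall x, V1 0%Z [x] = 0).
  { intros x. destruct (classic (intercomm G enumG theta P i1 x)) as [H|H].
    - rewrite Heq. apply HS2. intros H2. apply (Hdisj x); auto.
    - apply HS1; auto. }
  destruct HV1 as [[_ [Hone [Hright _]]] _].
  specialize (Hright 0%Z []). rewrite Hone in Hright.
  change (1 = fsum enumG (fun g => V1 0%Z ([] ++ [g]))) in Hright.
  simpl app in Hright. rewrite (fsum_ext _ _ (fun _ => 0)) in Hright by (intros; apply Hz).
  rewrite fsum_zero in Hright. lra.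
Qed.
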